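(* Let $\boldsymbol{\mathcal{A}}\in\mathbb{C}^{N\times N\times M\times M}$ and $\mathbf{v},\mathbf{w}\in\mathbb{C}^N$ with $\mathbf{w}^H\mathbf{v}=1$, and run the tensor non-Hermitian Lanczos process (see context) with arbitrary nonsingular choices $\boldsymbol{\gamma}_2,\boldsymbol{\gamma}_3,\dots$. Let $n\ge1$ and suppose $\boldsymbol{\beta}_2,\dots,\boldsymbol{\beta}_n$ are all nonsingular, so that $\boldsymbol{\alpha}_1,\dots,\boldsymbol{\alpha}_n$, $\boldsymbol{\beta}_2,\dots,\boldsymbol{\beta}_n$, $\boldsymbol{\gamma}_2,\dots,\boldsymbol{\gamma}_n$ and hence $\boldsymbol{\mathcal{T}}_n$ are defined. Let $E_1=\mathbf{e}_1\otimes I_M\in\mathbb{C}^{n\times M\times M}$ and $E_1^D=\mathbf{e}_1\otimes I_M$, where $\mathbf{e}_1$ is the first canonical basis vector of $\mathbb{C}^n$. Then $$W^D*\boldsymbol{\mathcal{A}}^{k_*}*V=E_1^D*(\boldsymbol{\mathcal{T}}_n)^{k_*}*E_1\quad\text{for }k=0,1,\dots,2n-1.$$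
   Context: Slicing and products: for a 4-mode tensor, $\boldsymbol{\mathcal{A}}_{i_1,i_2,:,:}$ denotes the $M\times M$ matrix slice; for a 3-mode tensor, $A_{i,:,:}$ likewise. $*$-tensor product: $(\boldsymbol{\mathcal{A}}*\boldsymbol{\mathcal{B}})_{i_1,i_2,:,:}=\sum_k\boldsymbol{\mathcal{A}}_{i_1,k,:,:}\boldsymbol{\mathcal{B}}_{k,i_2,:,:}$. Tensor-hypervector product: $(\boldsymbol{\mathcal{A}}*A)_{i,:,:}=\sum_k\boldsymbol{\mathcal{A}}_{i,k,:,:}A_{k,:,:}$; left action of a 3-mode tensor $B^D$ (superscript $D$ marks tensors acting from the left): $(B^D*\boldsymbol{\mathcal{A}})^D_{i,:,:}=\sum_k B^D_{k,:,:}\boldsymbol{\mathcal{A}}_{k,i,:,:}$; hypervector inner product $B^D*A=\sum_kB^D_{k,:,:}A_{k,:,:}\in\mathbb{C}^{M\times M}$. These products are associative. For $\boldsymbol{\alpha}\in\mathbb{C}^{M\times M}$ and a 3-mode tensor $A$: $(A\times\boldsymbol{\alpha})_{i,:,:}=A_{i,:,:}\boldsymbol{\alpha}$, $(\boldsymbol{\alpha}\times A)_{i,:,:}=\boldsymbol{\alpha}A_{i,:,:}$. For $\mathbf{a}\in\mathbb{C}^N$, $\mathbf{a}\otimes I_M\in\mathbb{C}^{N\times M\times M}$ has slices $(\mathbf{a}\otimes I_M)_{i,:,:}=\mathbf{a}_iI_M$. The $*$-identity $\boldsymbol{\mathcal{I}}_*$ (of the appropriate size) has slices $I_M$ when $i_1=i_2$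 and $0$ otherwise; $\boldsymbol{\mathcal{A}}^{0_*}=\boldsymbol{\mathcal{I}}_*$ and $\boldsymbol{\mathcal{A}}^{k_*}$ is the $k$-fold $*$-product of $\boldsymbol{\mathcal{A}}$ with itself. Tensor non-Hermitian Lanczos process: set $V=\mathbf{v}\otimes I_M$, $W^D=\overline{\mathbf{w}}\otimes I_M$, $V_0=W_0^D=0$, $\boldsymbol{\beta}_1=0$, $V_1=V$, $W_1^D=W^D$. For $k=1,2,\dots$: $\boldsymbol{\alpha}_k=W_k^D*\boldsymbol{\mathcal{A}}*V_k$; $\widehat W_{k+1}^D=W_k^D*\boldsymbol{\mathcal{A}}-\boldsymbol{\alpha}_k\times W_k^D-\boldsymbol{\beta}_k\times W_{k-1}^D$; $\widehat V_{k+1}=\boldsymbol{\mathcal{A}}*V_k-V_k\times\boldsymbol{\alpha}_k-V_{k-1}\times\boldsymbol{\gamma}_k$ (the term with $\boldsymbol{\gamma}_1$ vanishes since $V_0=0$); choose a nonsingular $\boldsymbol{\gamma}_{k+1}\in\mathbb{C}^{M\times M}$; $\boldsymbol{\beta}_{k+1}=\boldsymbol{\gamma}_{k+1}^{-1}(\widehat W_{k+1}^D*\widehat V_{k+1})$; if $\boldsymbol{\beta}_{k+1}$ is singular the process stops, otherwise $V_{k+1}=\widehat V_{k+1}\times\boldsymbol{\beta}_{k+1}^{-1}$ and $W_{k+1}^D=\boldsymbol{\gamma}_{k+1}^{-1}\times\widehat W_{k+1}^D$. Tridiagonal tensor $\boldsymbol{\mathcal{T}}_n\in\mathbb{C}^{n\times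 n\times M\times M}$: $(\boldsymbol{\mathcal{T}}_n)_{i,i,:,:}=\boldsymbol{\alpha}_i$ ($1\le i\le n$), $(\boldsymbol{\mathcal{T}}_n)_{i,i+1,:,:}=\boldsymbol{\gamma}_{i+1}$ ($1\le i\le n-1$), $(\boldsymbol{\mathcal{T}}_n)_{i,i-1,:,:}=\boldsymbol{\beta}_i$ ($2\le i\le n$), all other slices zero. *)

(* Defs.v *)
From HB Require Import structures.
From mathcomp Require Import all_boot all_order all_algebra.
Set Implicit Arguments. Unset Strict Implicit. Unset Printing Implicit Defensive.
Import Order.TTheory GRing.Theory Num.Theory.
Local Open Scope ring_scope.

Section Tensors.
Variables (C : numClosedFieldType) (M : nat).

(* 4-mode tensor in C^{N x N x M x M}: slices A i1 i2 : 'M_M *)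
Definition tensor4 (N : nat) := 'I_N -> 'I_N -> 'M[C]_M.
(* 3-mode tensor (hypervector) in C^{N x M x M} *)
Definition hvec (N : nat) := 'I_N -> 'M[C]_M.

Definition tmul N (A B : tensor4 N) : tensor4 N :=
  fun i1 i2 => \sum_(k < N) A i1 k *m B k i2.
Definition tvmul N (A : tensor4 N) (X : hvec N) : hvec N :=
  fun i => \sum_(k < N) A i k *m X k.
Definition vtmul N (B : hvec N) (A : tensor4 N) : hvec N :=
  fun i => \sum_(k < N) B k *m A k i.
Definition hdot N (B X : hvec N) : 'M[C]_M := \sum_(k < N) B k *m X k.
Definition hscr N (X : hvec N) (a : 'M[C]_M) : hvec N := fun i => X i *m a.
Definition hscl N (a : 'M[C]_M) (X : hvec N) : hvec N := fun i => a *m X i.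
Definition hadd N (X Y : hvec N) : hvec N := fun i => X i + Y i.
Definition hopp N (X : hvec N) : hvec N := fun i => - X i.
Definition hzero N : hvec N := fun _ => 0.
Definition kronI N (a : 'I_N -> C) : hvec N := fun i => a i *: 1%:M.
Definition tid N : tensor4 N := fun i1 i2 => if i1 == i2 then 1%:M else 0.
Definition tpow N (A : tensor4 N) (k : nat) : tensor4 N := iter k (tmul A) (@tid N).

(* State of the Lanczos process at step k >= 1:
   (V_{k-1}, V_k, W^D_{k-1}, W^D_k, beta_k). *)
Record lstate N := LState {
  Vprev : hvec N; Vcur : hvec N; Wprev : hvec N; Wcur : hvec N; betacur : 'M[C]_M }.

Definition lalpha N (A : tensor4 N) (s : lstate N) : 'M[C]_M :=
  hdot (vtmul (Wcur s) A) (Vcur s).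

(* one step k -> k+1, with gk = gamma_k, gk1 = gamma_{k+1} *)
Definition lstep N (A : tensor4 N) (gk gk1 : 'M[C]_M) (s : lstate N) : lstate N :=
  let a := lalpha A s in
  let What := hadd (vtmul (Wcur s) A)
                   (hopp (hadd (hscl a (Wcur s)) (hscl (betacur s) (Wprev s)))) in
  let Vhat := hadd (tvmul A (Vcur s))
                   (hopp (hadd (hscr (Vcur s) a) (hscr (Vprev s) gk))) in
  let b := invmx gk1 *m hdot What Vhat in
  LState (Vcur s) (hscr Vhat (invmx b)) (Wcur s) (hscl (invmx gk1) What) b.

(* lanczos A V W gam k = state at step k.+1 (k >= 0) *)
Fixpoint lanczos N (A : tensor4 N) (V W : hvec N) (gam : nat -> 'M[C]_M) (k : nat)
  : lstate N :=
  match k with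
  | 0 => LState (@hzero N) V (@hzero N) W 0
  | k'.+1 => lstep A (gam k) (gam k.+1) (lanczos A V W gam k')
  end.

(* 1-based accessors: alpha_k, beta_k (k >= 1) *)
Definition alpha N A V W gam (k : nat) : 'M[C]_M := lalpha A (@lanczos N A V W gam k.-1).
Definition beta N A V W gam (k : nat) : 'M[C]_M := betacur (@lanczos N A V W gam k.-1).

(* tridiagonal tensor T_n (0-based indices i, j of 'I_n correspond to i+1, j+1) *)
Definition Ttri N A V W gam (n : nat) : tensor4 n := fun i j =>
  if val i == val j then alpha A V W gam (val i).+1
  else if (val j == (val i).+1) then gam (val i).+2
  else if (val i == (val j).+1) then @beta N A V W gam (val i).+1
  else 0.

Definition Efirst (n : nat) : hvec n := fun i => if val i == 0%N then 1%:M else 0.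

End Tensors.

Arguments Ttri {C M N} A V W gam n _ _.
Arguments Efirst {C M} n _.
Arguments tid {C M} N _ _.
Arguments hzero {C M} N _.

(* Main.v *)
Require Import Defs.
From HB Require Import structures.
From mathcomp Require Import all_boot all_order all_algebra.
From mathcomp Require Import zify.
From Stdlib Require Import FunctionalExtensionality.
Set Implicit Arguments. Unset Strict Implicit. Unset Printing Implicit Defensive.
Import Order.TTheory GRing.Theory Num.Theory.
Local Open Scope ring_scope.

Section Gen.
Variables (C : numClosedFieldType) (M N : nat).
Implicit Types (A B : tensor4 C M N) (X Y Z : hvec C M N).

Lemma hdot_vt A Y X : hdot (vtmul Y A) X = hdot Y (tvmul A X).
Proof.
rewrite /hdot /vtmul /tvmul.
under eq_bigr => i _ do rewrite mulmx_suml.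
rewrite exchange_big; apply: eq_bigr => k _.
by rewrite mulmx_sumr; apply: eq_bigr => i _; rewrite mulmxA.
Qed.

Lemma vtmul_tmul Y A B : vtmul Y (tmul A B) = vtmul (vtmul Y A) B.
Proof.
apply: functional_extensionality => i; rewrite /vtmul /tmul.
under eq_bigr => k _ do rewrite mulmx_sumr.
rewrite exchange_big; apply: eq_bigr => l _.
by rewrite mulmx_suml; apply: eq_bigr => k _; rewrite mulmxA.
Qed.

Lemma vtmul_tid Y : vtmul Y (tid N) = Y.
Proof.
apply: functional_extensionality => i; rewrite /vtmul /tid.
rewrite (bigD1 i) //= eqxx mulmx1 big1 ?addr0 // => k /negbTE ->.
by rewrite mulmx0.
Qed.

Definition iterL A k Y := iter k (fun Z => vtmul Z A) Y.
Definition iterR A k X := iter k (tvmul A) X.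

Lemma vtmul_tpow A k Y : vtmul Y (tpow A k) = iterL A k Y.
Proof.
elim: k Y => [|k IH] Y; first by rewrite /= vtmul_tid.
rewrite /iterL (iterSr k (fun Z => vtmul Z A) Y) -/(iterL A k _) -IH -vtmul_tmul.
by [].
Qed.

Lemma hdot_iter A b Z X : hdot (iterL A b Z) X = hdot Z (iterR A b X).
Proof.
elim: b Z => [|b IH] Z //.
rewrite /iterL (iterSr b (fun Z => vtmul Z A) Z) -/(iterL A b _) IH hdot_vt.
by [].
Qed.


Lemma hdot_split A a b Y X :
  hdot (vtmul Y (tpow A (b + a))) X = hdot (iterL A a Y) (iterR A b X).
Proof. by rewrite vtmul_tpow /iterL (iterD b a (fun Z => vtmul Z A) Y) -/(iterL A b _) -/(iterL A a _) hdot_iter. Qed.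

Lemma hdot_addl X Y Z : hdot (hadd X Y) Z = hdot X Z + hdot Y Z.
Proof. by rewrite /hdot -big_split; apply: eq_bigr => i _; rewrite mulmxDl. Qed.
Lemma hdot_addr X Y Z : hdot Z (hadd X Y) = hdot Z X + hdot Z Y.
Proof. by rewrite /hdot -big_split; apply: eq_bigr => i _; rewrite mulmxDr. Qed.
Lemma hdot_oppl X Z : hdot (hopp X) Z = - hdot X Z.
Proof. by rewrite /hdot -sumrN; apply: eq_bigr => i _; rewrite mulNmx. Qed.
Lemma hdot_oppr X Z : hdot Z (hopp X) = - hdot Z X.
Proof. by rewrite /hdot -sumrN; apply: eq_bigr => i _; rewrite mulmxN. Qed.
Lemma hdot_scl a X Z : hdot (hscl a X) Z = a *m hdot X Z.
Proof. by rewrite /hdot mulmx_sumr; apply: eq_bigr => i _; rewrite mulmxA. Qed.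
Lemma hdot_scr a X Z : hdot Z (hscr X a) = hdot Z X *m a.
Proof. by rewrite /hdot mulmx_suml; apply: eq_bigr => i _; rewrite mulmxA. Qed.
Lemma hdot_0l Z : hdot (hzero N) Z = 0.
Proof. by rewrite /hdot big1 // => i _; rewrite mul0mx. Qed.
Lemma hdot_0r Z : hdot Z (hzero N) = 0.
Proof. by rewrite /hdot big1 // => i _; rewrite mulmx0. Qed.

End Gen.

Lemma neqF (a b : nat) : a <> b -> (a == b) = false.
Proof. by move/eqP/negbTE. Qed.

Section Lz.
Variables (C : numClosedFieldType) (M N : nat) (A : tensor4 C M N)
  (V W : hvec C M N) (gam : nat -> 'M[C]_M).

Definition S k := lanczos A V W gam k.
Definition Vc k := Vcur (S k).
Definition Wc k := Wcur (S k).
Definition Vp k := Vprev (S k).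
Definition Wp k := Wprev (S k).
Definition al k := lalpha A (S k).
Definition be k := betacur (S k).
Definition Vh k := hadd (tvmul A (Vc k))
                   (hopp (hadd (hscr (Vc k) (al k)) (hscr (Vp k) (gam k.+1)))).
Definition Wh k := hadd (vtmul (Wc k) A)
                   (hopp (hadd (hscl (al k) (Wc k)) (hscl (be k) (Wp k)))).

Lemma Vc_S k : Vc k.+1 = hscr (Vh k) (invmx (be k.+1)). Proof. by []. Qed.
Lemma Wc_S k : Wc k.+1 = hscl (invmx (gam k.+2)) (Wh k). Proof. by []. Qed.
Lemma Vp_S k : Vp k.+1 = Vc k. Proof. by []. Qed.
Lemma Wp_S k : Wp k.+1 = Wc k. Proof. by []. Qed.
Lemma be_S k : be k.+1 = invmx (gam k.+2) *m hdot (Wh k) (Vh k). Proof. by []. Qed.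
Lemma Vp_0 : Vp 0 = hzero N. Proof. by []. Qed.
Lemma Wp_0 : Wp 0 = hzero N. Proof. by []. Qed.
Lemma be_0 : be 0 = 0. Proof. by []. Qed.
Lemma al_def k : al k = hdot (vtmul (Wc k) A) (Vc k). Proof. by []. Qed.

Opaque Vc Wc Vp Wp al be.

Lemma RV k : tvmul A (Vc k) = hadd (hadd (hscr (Vc k) (al k)) (hscr (Vp k) (gam k.+1))) (Vh k).
Proof.
apply: functional_extensionality => x.
by rewrite /Vh /hadd /hopp [RHS]addrC subrK.
Qed.

Lemma RW k : vtmul (Wc k) A = hadd (hadd (hscl (al k) (Wc k)) (hscl (be k) (Wp k))) (Wh k).
Proof.
apply: functional_extensionality => x.
by rewrite /Wh /hadd /hopp [RHS]addrC subrK.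
Qed.

Hypothesis Hg : forall j, (2 <= j)%N -> gam j \in unitmx.

Lemma Wh_eq k : Wh k = hscl (gam k.+2) (Wc k.+1).
Proof.
apply: functional_extensionality => x.
by rewrite Wc_S /hscl mulmxA mulmxV ?mul1mx //; apply: Hg.
Qed.

Lemma Vh_eq k : be k.+1 \in unitmx -> Vh k = hscr (Vc k.+1) (be k.+1).
Proof.
move=> Hb; apply: functional_extensionality => x.
by rewrite Vc_S /hscr -mulmxA mulVmx ?mulmx1.
Qed.

Variable n' : nat.
Hypothesis Hb : forall k, (1 <= k <= n')%N -> be k \in unitmx.
Hypothesis H0 : hdot (Wc 0) (Vc 0) = 1%:M.

Definition Pm m := forall i j, (i <= m)%N -> (j <= m)%N ->
  hdot (Wc i) (Vc j) = if i == j then 1%:M else 0.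

Lemma L1 m : (m <= n')%N -> Pm m -> forall i, (i <= m)%N -> hdot (Wc i) (Vh m) = 0.
Proof.
move=> Hm P i Hi.
rewrite /Vh hdot_addr hdot_oppr hdot_addr !hdot_scr -hdot_vt.
case: (ltngtP i m) => [lt_im||eq_im]; last first.
- subst i; rewrite -al_def P // eqxx mul1mx.
  case: m Hm P Hi => [|m] Hm P Hi; first by rewrite Vp_0 hdot_0r mul0mx addr0 subrr.
  by rewrite Vp_S P // ?(leqnSn) // (@neqF (m.+1) (m)) ?mul0mx ?addr0 ?subrr //; lia.
- by move=> /ltn_geF; rewrite Hi.
rewrite RW Wh_eq !hdot_addl (hdot_scl (al i)) (hdot_scl (be i)) (hdot_scl (gam i.+2)) P // (@neqF (i) (m)); last by lia.
rewrite mulmx0 mul0mx add0r.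
case: m Hm P Hi lt_im => [|m] Hm P Hi lt_im //.
rewrite Vp_S (P i.+1 m.+1) ?(P i m); try lia.
case: i Hi lt_im => [|i] Hi lt_im.
  rewrite Wp_0 hdot_0l mulmx0 add0r.
  case: (eqVneq m 0%N) => [->|ne]; first by rewrite /= mulmx1 mul1mx add0r subrr.
  rewrite (@neqF (1) (m.+1)) ?(@neqF (0) (m)) ?mulmx0 ?mul0mx ?add0r ?oppr0 ?subrr //; lia.
rewrite Wp_S (P i m.+1); try lia.
rewrite (@neqF (i) (m.+1)) ?mulmx0 ?add0r; last by lia.
case: (eqVneq i.+1 m) => [<-|ne]; first by rewrite !eqxx mulmx1 mul1mx subrr.
rewrite (@neqF (i.+2) (m.+1)) ?(@neqF (i.+1) (m)) ?mulmx0 ?mul0mx ?add0r ?oppr0 ?subrr //; lia.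
Qed.

Ltac simpm := rewrite ?eqxx ?mulmx1 ?mul1mx ?mulmx0 ?mul0mx ?add0r ?addr0 ?oppr0 ?subrr.

Lemma L2 m : (m <= n')%N -> Pm m -> forall j, (j <= m)%N -> hdot (Wh m) (Vc j) = 0.
Proof.
move=> Hm P j Hj.
rewrite /Wh hdot_addl hdot_oppl hdot_addl (hdot_scl (al m)) (hdot_scl (be m)).
case: (ltngtP j m) => [lt_jm||eq_jm]; last first.
- subst j; rewrite -al_def P // eqxx mulmx1.
  case: m Hm P Hj => [|m] Hm P Hj; first by rewrite Wp_0 hdot_0l mulmx0 addr0 subrr.
  by rewrite Wp_S P // (@neqF m m.+1) ?mulmx0 ?addr0 ?subrr //; lia.
- by move=> /ltn_geF; rewrite Hj.
rewrite hdot_vt RV (Vh_eq); last by apply: Hb; lia.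
rewrite !hdot_addr (hdot_scr (al j)) (hdot_scr (gam j.+1)) (hdot_scr (be j.+1)) P // (@neqF m j); last by lia.
simpm.
case: m Hm P Hj lt_jm => [|m] Hm P Hj lt_jm //.
rewrite Wp_S (P m.+1 j.+1) ?(P m j); try lia.
case: j Hj lt_jm => [|j] Hj lt_jm.
  rewrite Vp_0 hdot_0r; simpm.
  case: (eqVneq m 0%N) => [->|ne]; first by simpm.
  rewrite (@neqF m.+1 1); last lia; by simpm.
rewrite Vp_S (P m.+1 j); try lia.
rewrite (@neqF m.+1 j); last by lia.
simpm.
case: (eqVneq m j.+1) => [->|ne]; first by simpm.
rewrite (@neqF m.+1 j.+2); last lia; by simpm.
Qed.

Lemma Pm_S m : (m.+1 <= n')%N -> Pm m -> Pm m.+1.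
Proof.
move=> Hm P i j Hi Hj.
case: (ltnP m i) => Hi'; case: (ltnP m j) => Hj'.
- have -> : i = m.+1 by lia.
  have -> : j = m.+1 by lia.
  rewrite Wc_S Vc_S (hdot_scl (invmx (gam m.+2))) hdot_scr eqxx mulmxA -be_S mulmxV //.
  by apply: Hb; lia.
- have -> : i = m.+1 by lia.
  rewrite Wc_S (hdot_scl (invmx (gam m.+2))) (L2 _ P) ?mulmx0 ?(@neqF m.+1 j) //; lia.
- have -> : j = m.+1 by lia.
  rewrite Vc_S hdot_scr (L1 _ P) ?mul0mx ?(@neqF i m.+1) //; lia.
- exact: P.
Qed.

Lemma Pm_all m : (m <= n')%N -> Pm m.
Proof.
elim: m => [|m IH] Hm.
  move=> i j Hi Hj; have -> : i = 0%N by lia.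
  by have -> : j = 0%N by lia.
apply: Pm_S => //; apply: IH; lia.
Qed.

End Lz.

Section Lz3.
Variables (C : numClosedFieldType) (M N : nat) (A : tensor4 C M N)
  (V W : hvec C M N) (gam : nat -> 'M[C]_M) (n' : nat).

Local Notation Vc := (Vc A V W gam).
Local Notation Wc := (Wc A V W gam).
Local Notation Vp := (Vp A V W gam).
Local Notation Wp := (Wp A V W gam).
Local Notation al := (al A V W gam).
Local Notation be := (be A V W gam).
Local Notation Vh := (Vh A V W gam).
Local Notation Wh := (Wh A V W gam).

Definition T := Ttri A V W gam n'.+1.
Definition ext (c : hvec C M n'.+1) (j : nat) : 'M[C]_M :=
  if (j < n'.+1)%N then c (inord j) else 0.

Lemma ext_ord c (i : 'I_n'.+1) : ext c i = c i.
Proof. by rewrite /ext ltn_ord inord_val. Qed.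
Lemma ext_out c j : (n'.+1 <= j)%N -> ext c j = 0.
Proof. move=> H; rewrite /ext; case: ifP => // H'; lia. Qed.

Lemma sum_pt (n0 m : nat) (F : nat -> 'M[C]_M) :
  \sum_(k < n0) (if nat_of_ord k == m then F (nat_of_ord k) else 0) = if (m < n0)%N then F m else 0.
Proof.
rewrite -(big_mkord xpredT (fun k => if k == m then F k else 0)).
elim: n0 => [|n0 IH]; first by rewrite big_geq.
rewrite big_nat_recr //= IH.
case: (ltngtP m n0) => [lt|gt|->].
- rewrite addr0.
  by have -> : (m < n0.+1)%N = true by lia.
- rewrite addr0.
  by have -> : (m < n0.+1)%N = false by lia.
- by rewrite add0r ltnSn.
Qed.

Lemma auxR (a b : nat) (X Y Z c : 'M[C]_M) :
  (if a == b then X else if b == a.+1 then Y else if a == b.+1 then Z else 0) *m c =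
  (if b == a then X *m c else 0) + (if b == a.+1 then Y *m c else 0)
  + (if b == a.-1 then (if (0 < a)%N then Z *m c else 0) else 0).
Proof.
repeat (case: eqP => ? /=); try (exfalso; lia); try (case: ifP => ?);
  rewrite ?mul0mx ?addr0 ?add0r //; exfalso; lia.
Qed.

Lemma auxL (a b : nat) (f g h : nat -> 'M[C]_M) (c : 'M[C]_M) :
  c *m (if b == a then f b else if a == b.+1 then g b else if b == a.+1 then h b else 0) =
  (if b == a then c *m f a else 0)
  + (if b == a.-1 then (if (0 < a)%N then c *m g a.-1 else 0) else 0)
  + (if b == a.+1 then c *m h a.+1 else 0).
Proof.
repeat (case: eqP => ? /=); try (exfalso; lia); try subst; try (case: ifP => ?);
  rewrite ?mulmx0 ?addr0 ?add0r //; try (exfalso; lia).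
Qed.

Lemma Tr c (i : 'I_n'.+1) :
  tvmul T c i = al i *m ext c i + gam i.+2 *m ext c i.+1 + be i *m ext c i.-1.
Proof.
rewrite /tvmul.
transitivity (\sum_(k < n'.+1) ((if nat_of_ord k == nat_of_ord i then al i *m ext c k else 0)
   + (if nat_of_ord k == (nat_of_ord i).+1 then gam (nat_of_ord i).+2 *m ext c k else 0)
   + (if nat_of_ord k == (nat_of_ord i).-1 then (if (0 < nat_of_ord i)%N then be i *m ext c k else 0) else 0))).
  by apply: eq_bigr => k _; rewrite /T /Ttri -ext_ord auxR.
rewrite !big_split /= (sum_pt _ _ (fun k => al i *m ext c k))
  (sum_pt _ _ (fun k => gam i.+2 *m ext c k))
  (sum_pt _ _ (fun k => if (0 < nat_of_ord i)%N then be i *m ext c k else 0)) ltn_ord.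
case: i => /= i Hi.
rewrite (_ : (i.-1 < n'.+1)%N = true); last lia.
have E : (if (i.+1 < n'.+1)%N then gam i.+2 *m ext c i.+1 else 0) = gam i.+2 *m ext c i.+1.
  by case: ifP => H1 //; rewrite ext_out ?mulmx0 //; lia.
by rewrite E; case: i Hi {E} => [|k] Hi //=; rewrite be_0 mul0mx.
Qed.

Lemma Tl d (i : 'I_n'.+1) :
  vtmul d T i = ext d i *m al i + (if (0 < nat_of_ord i)%N then ext d i.-1 *m gam i.+1 else 0)
     + ext d i.+1 *m be i.+1.
Proof.
rewrite /vtmul.
transitivity (\sum_(k < n'.+1) ((if nat_of_ord k == nat_of_ord i then ext d k *m al i else 0)
   + (if nat_of_ord k == (nat_of_ord i).-1 then (if (0 < nat_of_ord i)%N then ext d k *m gam (nat_of_ord i).-1.+2 else 0) else 0)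
   + (if nat_of_ord k == (nat_of_ord i).+1 then ext d k *m be (nat_of_ord i).+1 else 0))).
  apply: eq_bigr => k _; rewrite /T /Ttri -ext_ord.
  exact: (auxL (nat_of_ord i) (nat_of_ord k) (fun b => al b) (fun b => gam b.+2) (fun b => be b)).
rewrite !big_split /= (sum_pt _ _ (fun k => ext d k *m al i))
  (sum_pt _ _ (fun k => if (0 < nat_of_ord i)%N then ext d k *m gam (nat_of_ord i).-1.+2 else 0))
  (sum_pt _ _ (fun k => ext d k *m be i.+1)) ltn_ord.
case: i => /= i Hi.
rewrite (_ : (i.-1 < n'.+1)%N = true); last lia.
have E : (if (i.+1 < n'.+1)%N then ext d i.+1 *m be i.+1 else 0) = ext d i.+1 *m be i.+1.
  by case: ifP => H1 //; rewrite ext_out ?mul0mx //; lia.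
by rewrite E; case: i Hi {E} => [|k] Hi.
Qed.

Hypothesis Hg : forall j, (2 <= j)%N -> gam j \in unitmx.
Hypothesis Hb : forall k, (1 <= k <= n')%N -> be k \in unitmx.

Definition comb (c : hvec C M n'.+1) : hvec C M N :=
  fun x => \sum_(j < n'.+1) Vc j x *m c j.
Definition combW (d : hvec C M n'.+1) : hvec C M N :=
  fun x => \sum_(j < n'.+1) d j *m Wc j x.

Lemma tv_comb c x : tvmul A (comb c) x = \sum_(0 <= j < n'.+1) tvmul A (Vc j) x *m ext c j.
Proof.
rewrite big_mkord /tvmul /comb.
under eq_bigr => y _ do rewrite mulmx_sumr.
rewrite exchange_big; apply: eq_bigr => j _.
by rewrite ext_ord mulmx_suml; apply: eq_bigr => y _; rewrite mulmxA.
Qed.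

Lemma vt_comb d x : vtmul (combW d) A x = \sum_(0 <= j < n'.+1) ext d j *m vtmul (Wc j) A x.
Proof.
rewrite big_mkord /vtmul /combW.
under eq_bigr => y _ do rewrite mulmx_suml.
rewrite exchange_big; apply: eq_bigr => j _.
by rewrite ext_ord mulmx_sumr; apply: eq_bigr => y _; rewrite mulmxA.
Qed.

Lemma comb_nat c x : comb c x = \sum_(0 <= j < n'.+1) Vc j x *m ext c j.
Proof. by rewrite big_mkord; apply: eq_bigr => j _; rewrite ext_ord. Qed.
Lemma combW_nat d x : combW d x = \sum_(0 <= j < n'.+1) ext d j *m Wc j x.
Proof. by rewrite big_mkord; apply: eq_bigr => j _; rewrite ext_ord. Qed.

Lemma combV c : tvmul A (comb c) = hadd (comb (tvmul T c)) (hscr (Vh n') (ext c n')).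
Proof.
apply: functional_extensionality => x.
rewrite /hadd /hscr tv_comb comb_nat.
have RVx j : tvmul A (Vc j) x = Vc j x *m al j + Vp j x *m gam j.+1 + Vh j x.
  by rewrite RV.
under eq_bigr do rewrite RVx mulmxDl mulmxDl.
rewrite (@eq_big_nat _ _ _ 0 n'.+1 (fun j => Vc j x *m ext (tvmul T c) j)
   (fun j => Vc j x *m al j *m ext c j + Vc j x *m gam j.+2 *m ext c j.+1
             + Vc j x *m be j *m ext c j.-1)); last first.
  move=> j /andP [_ Hj]; rewrite {1}/ext Hj (Tr c (inord j)) inordK //.
  by rewrite !mulmxDr !mulmxA.
rewrite !big_split /=.
rewrite (big_nat_recl n' 0 (fun j => Vp j x *m gam j.+1 *m ext c j)) //.
rewrite Vp_0 /hzero !mul0mx add0r.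
rewrite (big_nat_recr n' 0 (fun j => Vh j x *m ext c j)) //=.
rewrite (big_nat_recr n' 0 (fun j => Vc j x *m gam j.+2 *m ext c j.+1)) //=.
rewrite (ext_out c (leqnn n'.+1)) mulmx0 addr0.
rewrite (big_nat_recl n' 0 (fun j => Vc j x *m be j *m ext c j.-1)) //=.
rewrite be_0 mulmx0 mul0mx add0r.
rewrite (@eq_big_nat _ _ _ 0 n' (fun j => Vh j x *m ext c j)
   (fun j => Vc j.+1 x *m be j.+1 *m ext c j)); last first.
  move=> j /andP [_ Hj]; rewrite Vh_eq //; apply: Hb; lia.
by rewrite !addrA.
Qed.

Lemma combWA d : vtmul (combW d) A = hadd (combW (vtmul d T)) (hscl (ext d n') (Wh n')).
Proof.
apply: functional_extensionality => x.
rewrite /hadd /hscl vt_comb combW_nat.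
have RWx j : vtmul (Wc j) A x = al j *m Wc j x + be j *m Wp j x + Wh j x.
  by rewrite RW.
under eq_bigr do rewrite RWx mulmxDr mulmxDr.
rewrite (@eq_big_nat _ _ _ 0 n'.+1 (fun j => ext (vtmul d T) j *m Wc j x)
   (fun j => ext d j *m (al j *m Wc j x)
      + (if (0 < j)%N then ext d j.-1 *m (gam j.+1 *m Wc j x) else 0)
      + ext d j.+1 *m (be j.+1 *m Wc j x))); last first.
  move=> j /andP [_ Hj]; rewrite {1}/ext Hj (Tl d (inord j)) inordK //.
  rewrite !mulmxDl -!mulmxA; congr (_ + _ + _).
  by case: ifP => _; rewrite ?mul0mx ?mulmxA.
rewrite !big_split /=.
rewrite (big_nat_recl n' 0 (fun j => ext d j *m (be j *m Wp j x))) //.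
rewrite be_0 !mul0mx mulmx0 add0r.
rewrite (big_nat_recr n' 0 (fun j => ext d j *m Wh j x)) //=.
rewrite (big_nat_recr n' 0 (fun j => ext d j.+1 *m (be j.+1 *m Wc j x))) //=.
rewrite (ext_out d (leqnn n'.+1)) mul0mx addr0.
rewrite (big_nat_recl n' 0 (fun j => if (0 < j)%N then ext d j.-1 *m (gam j.+1 *m Wc j x) else 0)) //=.
rewrite add0r.
rewrite (@eq_big_nat _ _ _ 0 n' (fun j => ext d j *m Wh j x)
   (fun j => ext d j *m (gam j.+2 *m Wc j.+1 x))); last first.
  by move=> j _; rewrite (Wh_eq A V W Hg).
rewrite !addrA; congr (_ + _); rewrite -!addrA; congr (_ + _); exact: addrC.
Qed.

Lemma hdot_combW d Y : hdot (combW d) Y = \sum_(i < n'.+1) d i *m hdot (Wc i) Y.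
Proof.
rewrite /hdot /combW.
under eq_bigr => y _ do rewrite mulmx_suml.
rewrite exchange_big; apply: eq_bigr => i _.
by rewrite mulmx_sumr; apply: eq_bigr => y _; rewrite mulmxA.
Qed.

Lemma hdot_comb X c : hdot X (comb c) = \sum_(j < n'.+1) hdot X (Vc j) *m c j.
Proof.
rewrite /hdot /comb.
under eq_bigr => y _ do rewrite mulmx_sumr.
rewrite exchange_big; apply: eq_bigr => j _.
by rewrite mulmx_suml; apply: eq_bigr => y _; rewrite mulmxA.
Qed.

Lemma biorth d c : Pm A V W gam n' -> hdot (combW d) (comb c) = hdot d c.
Proof.
move=> P; rewrite hdot_combW /hdot; apply: eq_bigr => i _; congr (_ *m _).
have Hi : (i <= n')%N by have := ltn_ord i.
have -> : \sum_(k < N) Wc i k *m comb c k = hdot (Wc i) (comb c) by [].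
rewrite hdot_comb (bigD1 i) //= (P i i Hi Hi) eqxx mul1mx.
rewrite big1 ?addr0 // => j ne.
have Hj : (j <= n')%N by have := ltn_ord j.
rewrite (P i j Hi Hj).
case: eqP => [e|]; last by rewrite mul0mx.
by move: ne; rewrite (val_inj e) eqxx.
Qed.

Lemma extTr c j : (j < n'.+1)%N ->
  ext (tvmul T c) j = al j *m ext c j + gam j.+2 *m ext c j.+1 + be j *m ext c j.-1.
Proof. by move=> H; rewrite {1}/ext H Tr inordK. Qed.

Lemma extTl d j : (j < n'.+1)%N ->
  ext (vtmul d T) j = ext d j *m al j + (if (0 < j)%N then ext d j.-1 *m gam j.+1 else 0)
     + ext d j.+1 *m be j.+1.
Proof. by move=> H; rewrite {1}/ext H Tl inordK. Qed.

Definition E := Efirst (C:=C) (M:=M) n'.+1.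

Lemma ext_E j : ext E j = if j == 0%N then 1%:M else 0.
Proof.
rewrite /ext /E /Efirst; case: ifP => H; first by rewrite -[\val _]/(nat_of_ord _) inordK.
by case: eqP => // e; move: H; rewrite e.
Qed.

Lemma suppR b j : (b < j)%N -> ext (iterR T b E) j = 0.
Proof.
elim: b j => [|b IH] j Hj; first by rewrite /= ext_E (@neqF j 0) //; lia.
rewrite /iterR iterS -/(iterR T b E).
case: (ltnP j n'.+1) => H; last by rewrite ext_out.
rewrite extTr // !IH ?mulmx0 ?addr0 //; lia.
Qed.

Lemma suppL a j : (a < j)%N -> ext (iterL T a E) j = 0.
Proof.
elim: a j => [|a IH] j Hj; first by rewrite /= ext_E (@neqF j 0) //; lia.
rewrite /iterL iterS -/(iterL T a E).
case: (ltnP j n'.+1) => H; last by rewrite ext_out.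
rewrite extTl // !IH ?mul0mx ?addr0 ?add0r; try lia.
by case: ifP => // _; rewrite IH ?mul0mx //; lia.
Qed.

Lemma combE : comb E = V.
Proof.
apply: functional_extensionality => x.
rewrite comb_nat big_nat_recl // ext_E eqxx mulmx1 big1 ?addr0 // => j _.
by rewrite ext_E mulmx0.
Qed.

Lemma combWE : combW E = W.
Proof.
apply: functional_extensionality => x.
rewrite combW_nat big_nat_recl // ext_E eqxx mul1mx big1 ?addr0 // => j _.
by rewrite ext_E mul0mx.
Qed.

Lemma iterR_comb b : (b <= n')%N -> iterR A b V = comb (iterR T b E).
Proof.
elim: b => [|b IH] Hb'; first by rewrite /= combE.
rewrite /iterR !iterS -/(iterR A b V) -/(iterR T b E) IH; last by lia.
rewrite combV suppR //.
apply: functional_extensionality => x.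
by rewrite /hadd /hscr mulmx0 addr0.
Qed.

Lemma iterL_comb a : (a <= n')%N -> iterL A a W = combW (iterL T a E).
Proof.
elim: a => [|a IH] Ha'; first by rewrite /= combWE.
rewrite /iterL !iterS -/(iterL A a W) -/(iterL T a E) IH; last by lia.
rewrite combWA suppL //.
apply: functional_extensionality => x.
by rewrite /hadd /hscl mul0mx addr0.
Qed.

Hypothesis H0 : hdot (Wc 0) (Vc 0) = 1%:M.

Lemma main_ab a b : (a <= n')%N -> (b <= n'.+1)%N ->
  hdot (iterL A a W) (iterR A b V) = hdot (iterL T a E) (iterR T b E).
Proof.
move=> Ha Hb'.
have P := Pm_all Hg Hb H0 (leqnn n').
rewrite iterL_comb //.
case: (ltnP b n'.+1) => Hb2.
  rewrite iterR_comb; first exact: biorth.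
  by rewrite -ltnS.
have -> : b = n'.+1 by apply/eqP; rewrite eqn_leq Hb' Hb2.
rewrite /iterR !iterS -/(iterR A n' V) -/(iterR T n' E) iterR_comb //.
rewrite combV hdot_addr biorth // hdot_scr hdot_combW big1 ?mul0mx ?addr0 //.
move=> i _.
have Hi : (i <= n')%N by have := ltn_ord i.
by rewrite (L1 Hg (leqnn n') P Hi) mulmx0.
Qed.

End Lz3.

Unset Implicit Arguments.
Theorem theorem3p2 (C : numClosedFieldType) (N M : nat)
  (A : tensor4 C M N) (v w : 'I_N -> C) (gam : nat -> 'M[C]_M) (n : nat) :
  \sum_(i < N) (w i)^* * v i = 1 ->
  (forall j, (2 <= j)%N -> gam j \in unitmx) ->
  (1 <= n)%N ->
  (forall j, (2 <= j <= n)%N ->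
     beta A (kronI M v) (kronI M (fun i => (w i)^*)) gam j \in unitmx) ->
  forall k, (k < 2 * n)%N ->
    hdot (vtmul (kronI M (fun i => (w i)^*)) (tpow A k)) (kronI M v)
    = hdot (vtmul (Efirst n)
                  (tpow (Ttri A (kronI M v) (kronI M (fun i => (w i)^*)) gam n) k))
           (Efirst n).
Proof.
move=> Hwv Hg n1 Hbeta k Hk.
case: n n1 Hbeta Hk => [//|n'] _ Hbeta Hk.
have Hb : forall k0, (1 <= k0 <= n')%N ->
    be A (kronI M v) (kronI M (fun i => (w i)^*)) gam k0 \in unitmx.
  by move=> k0 Hk0; apply: (Hbeta k0.+1); lia.
have H0 : hdot (Wc A (kronI M v) (kronI M (fun i => (w i)^*)) gam 0)
               (Vc A (kronI M v) (kronI M (fun i => (w i)^*)) gam 0) = 1%:M.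
  rewrite /hdot.
  transitivity (\sum_(i < N) ((w i)^* * v i) *: (1%:M : 'M[C]_M)).
    apply: eq_bigr => i _.
    by rewrite /Wc /Vc /= /kronI -scalemxAl mul1mx scalerA.
  by rewrite -scaler_suml Hwv scale1r.
have -> : k = ((k - minn k n') + minn k n')%N by lia.
rewrite !hdot_split.
apply: (main_ab Hg Hb H0); lia.
Qed.
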